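(* Let $n\ge 2$, $d\ge n+1$, and let $f$ be a Perazzo form of degree $d$ in $S$ with $A_f$ having $h$-vector $(h_0,\dots,h_d)$. If $A_f$ has the weak Lefschetz property, then $\#\{i\mid h_i=d+2\}\le 1$.
   Context: $K$ is an algebraically closed field of characteristic zero. $S=K[x_0,\dots,x_n,u,v]$ and $R=K[y_0,\dots,y_n,U,V]$ acts on $S$ by differentiation ($y_i=\partial/\partial x_i$, $U=\partial/\partial u$, $V=\partial/\partial v$); write $\theta\circ f$ for this action. A Perazzo form of degree $d$ is $f=x_0p_0+x_1p_1+\cdots+x_np_n+g$ where $p_0,\dots,p_n\in K[u,v]_{d-1}$ are linearly independent but algebraically dependent forms and $g\in K[u,v]_d$. $\operatorname{Ann}_R(f)=\{\theta\in R:\theta\circ f=0\}$ and $A_f=R/\operatorname{Ann}_R(f)$ is a graded artinian Gorenstein algebra of socle degree $d$; its $h$-vector is $h_i=\dim_K [A_f]_i$, and satisfies $h_i=h_{d-i}$. A graded artinian algebra $A$ has the weak Lefschetz property (WLP) if there is $\ell\in[A]_1$ such that multiplication $\times\ell:[A]_i\to[A]_{i+1}$ has maximal rank (is injective or surjective) for every $i\ge 0$. *)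

(* Defs.v *)
From HB Require Import structures.
From mathcomp Require Import all_boot all_order all_algebra.
From mathcomp Require Import mpoly.
Set Implicit Arguments. Unset Strict Implicit. Unset Printing Implicit Defensive.
Import GRing.Theory.
Local Open Scope ring_scope.

(* Both S = K[x_0..x_n,u,v] and R = K[y_0..y_n,U,V] are modelled as
   {mpoly K[n.+3]}: variable index j <= n is x_j (resp. y_j),
   index n+1 is u (resp. U), index n+2 is v (resp. V). *)

Section Perazzo.
Variables (K : fieldType) (n : nat).
Notation P := {mpoly K[n.+3]}.

(* theta o f : action of R on S by differentiation
   (y^m acts as the iterated partial derivative d^m). *)
Definition act (theta f : P) : P :=
  \sum_(m <- msupp theta) theta@_m *: mderivm m f.

Definition annih (f theta : P) : Prop := act theta f = 0.

Definition in_Kuv (p : P) : Prop :=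
  forall m, m \in msupp p -> forall j : 'I_n.+3, (j <= n)%N -> m j = 0%N.

Definition perazzo_form (d : nat) (f : P) : Prop :=
  exists (p : 'I_n.+1 -> P) (g : P),
    [/\ forall i, in_Kuv (p i) /\ p i \is d.-1.-homog,
        in_Kuv g /\ g \is d.-homog,
        (forall c : 'I_n.+1 -> K, \sum_i c i *: p i = 0 -> forall i, c i = 0),
        (exists F : {mpoly K[n.+1]}, F != 0 /\ F \mPo [tuple p i | i < n.+1] = 0)
      & f = \sum_(i < n.+1) 'X_(inord i) * p i + g].

(* dim_K [A_f]_i = k, where [A_f]_i = R_i / Ann_R(f)_i:
   there are k forms of degree i whose classes form a basis of the quotient. *)
Definition hdim (f : P) (i k : nat) : Prop :=
  exists b : 'I_k -> P,
    [/\ forall j, b j \is i.-homog,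
        (forall c : 'I_k -> K, annih f (\sum_j c j *: b j) -> forall j, c j = 0)
      & forall theta, theta \is i.-homog ->
          exists c : 'I_k -> K, annih f (theta - \sum_j c j *: b j)].

Definition mul_inj (f l : P) (i : nat) : Prop :=
  forall theta, theta \is i.-homog -> annih f (l * theta) -> annih f theta.

Definition mul_surj (f l : P) (i : nat) : Prop :=
  forall eta, eta \is i.+1.-homog ->
    exists theta, theta \is i.-homog /\ annih f (eta - l * theta).

Definition has_WLP (f : P) : Prop :=
  exists l : P, l \is 1.-homog /\
    forall i : nat, mul_inj f l i \/ mul_surj f l i.

End Perazzo.

(* Main.v *)
Require Import Defs.
From HB Require Import structures.
From mathcomp Require Import all_boot all_order all_algebra.
From mathcomp Require Import mpoly ssrcomplements.
From mathcomp Require Import zify.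
Set Implicit Arguments. Unset Strict Implicit. Unset Printing Implicit Defensive.
Import GRing.Theory.
Local Open Scope ring_scope.


Section Count.
Variable K : fieldType.

Lemma mx_ker_nz k N (M : 'M[K]_(k, N)) : (N < k)%N ->
  exists c : 'rV[K]_k, c != 0 /\ c *m M = 0.
Proof.
move=> ltNk.
have : kermx M != 0.
  rewrite -mxrank_eq0 mxrank_ker.
  have := rank_leq_col M; lia.
move=> /eqP nz.
have [i Hi] : exists i, row i (kermx M) != 0.
  case: (pickP (fun i => row i (kermx M) != 0)) => [i Hi|H]; first by exists i.
  exfalso; apply: nz; apply/row_matrixP => i; rewrite row0.
  by apply/eqP; move: (H i) => /= /negbFE.
exists (row i (kermx M)); split => //.
by rewrite -row_mul mulmx_ker row0.
Qed.

Lemma count_indep (V : lmodType K) k N (b : 'I_k -> V) (w : 'I_N -> V) :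
  (forall c : 'I_k -> K, \sum_j c j *: b j = 0 -> forall j, c j = 0) ->
  (forall j, exists e : 'I_N -> K, b j = \sum_r e r *: w r) -> (k <= N)%N.
Proof.
move=> ind sp; rewrite leqNgt; apply/negP => lt.
have [E HE] := fin_all_exists sp.
have [c [cnz cM]] := mx_ker_nz (\matrix_(j, r) E j r) lt.
have H : \sum_j c 0 j *: b j = 0.
  under eq_bigr => j _ do rewrite HE scaler_sumr.
  rewrite exchange_big /= big1 // => r _.
  under eq_bigr => j _ do rewrite scalerA.
  rewrite -scaler_suml.
  have := congr1 (fun A : 'M_(1, N) => A 0 r) cM; rewrite !mxE => H.
  suff -> : \sum_j c 0 j * E j r = 0 by rewrite scale0r.
  by rewrite -{}[RHS]H; apply: eq_bigr => j _; rewrite mxE.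
apply/negP: cnz; rewrite negbK; apply/eqP/rowP => j; rewrite mxE.
exact: ind H j.
Qed.

Lemma count_indep2 (V : lmodType K) k N1 N2 (b : 'I_k -> V)
    (w1 : 'I_N1 -> V) (w2 : 'I_N2 -> V) :
  (forall c : 'I_k -> K, \sum_j c j *: b j = 0 -> forall j, c j = 0) ->
  (forall j, exists e1 : 'I_N1 -> K, exists e2 : 'I_N2 -> K,
     b j = \sum_r e1 r *: w1 r + \sum_r e2 r *: w2 r) -> (k <= N1 + N2)%N.
Proof.
move=> ind sp.
pose w r := match split r with inl a => w1 a | inr a => w2 a end.
apply: (count_indep (w := w)) ind _ => j.
have [e1 [e2 ->]] := sp j.
exists (fun r => match split r with inl a => e1 a | inr a => e2 a end).
rewrite big_split_ord /w; congr (_ + _); apply: eq_bigr => a _.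
  by rewrite (unsplitK (inl a)).
by rewrite (unsplitK (inr a)).
Qed.

Lemma comb_zero (V : lmodType K) k N (b : 'I_k -> V) (w : 'I_N -> V)
   (E : 'I_k -> 'I_N -> K) (c : 'rV[K]_k) :
  (forall j, b j = \sum_r E j r *: w r) -> c *m (\matrix_(j, r) E j r) = 0 ->
  \sum_j c 0 j *: b j = 0.
Proof.
move=> HE cM.
under eq_bigr => j _ do rewrite HE scaler_sumr.
rewrite exchange_big /= big1 // => r _.
under eq_bigr => j _ do rewrite scalerA.
rewrite -scaler_suml.
have := congr1 (fun A : 'M_(1, N) => A 0 r) cM; rewrite !mxE => H.
suff -> : \sum_j c 0 j * E j r = 0 by rewrite scale0r.
by rewrite -{}[RHS]H; apply: eq_bigr => j _; rewrite mxE.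
Qed.

Lemma count_two (V1 V2 : lmodType K) k N1 N2 (b1 : 'I_k -> V1) (b2 : 'I_k -> V2)
    (w1 : 'I_N1 -> V1) (w2 : 'I_N2 -> V2) :
  (forall c : 'I_k -> K, \sum_j c j *: b1 j = 0 -> \sum_j c j *: b2 j = 0 ->
     forall j, c j = 0) ->
  (forall j, exists e : 'I_N1 -> K, b1 j = \sum_r e r *: w1 r) ->
  (forall j, exists e : 'I_N2 -> K, b2 j = \sum_r e r *: w2 r) ->
  (k <= N1 + N2)%N.
Proof.
move=> ind sp1 sp2; rewrite leqNgt; apply/negP => lt.
have [E1 HE1] := fin_all_exists sp1.
have [E2 HE2] := fin_all_exists sp2.
have [c [cnz cM]] := mx_ker_nz (row_mx (\matrix_(j, r) E1 j r) (\matrix_(j, r) E2 j r)) lt.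
move: cM; rewrite mul_mx_row => /eqP; rewrite row_mx_eq0 => /andP[/eqP c1 /eqP c2].
have H1 := comb_zero HE1 c1; have H2 := comb_zero HE2 c2.
apply/negP: cnz; rewrite negbK; apply/eqP/rowP => j; rewrite mxE.
exact: ind H1 H2 j.
Qed.
End Count.


Section Act.
Variables (K : fieldType) (n : nat).
Notation P := {mpoly K[n.+3]}.
Implicit Types (theta g : P).

Lemma actwE k theta g : (msize theta <= k)%N ->
  act theta g = \sum_(m : 'X_{1..n.+3 < k}) theta@_m *: g^`M[m].
Proof.
move=> lt; pose I : subFinType _ := 'X_{1..n.+3 < k}.
rewrite /act (big_mksub I) //=; first last.
- by move=> x /msize_mdeg_lt /leq_trans; apply.
- by rewrite msupp_uniq.
by rewrite big_rmcond //= => i /memN_msupp_eq0 ->; rewrite scale0r.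
Qed.

Lemma actDZ (a : K) t1 t2 g : act (a *: t1 + t2) g = a *: act t1 g + act t2 g.
Proof.
pose k := (msize t1 + msize t2 + msize (a *: t1 + t2))%N.
rewrite !(@actwE k) /k; try lia.
rewrite scaler_sumr -big_split /=; apply: eq_bigr => m _.
by rewrite mcoeffD mcoeffZ scalerDl scalerA.
Qed.

Definition actl g theta := act theta g.
Lemma actl_is_linear g : linear (actl g).
Proof. by move=> a t1 t2; rewrite /actl actDZ. Qed.
End Act.

HB.instance Definition _ (K : fieldType) n g :=
  GRing.isLinear.Build K {mpoly K[n.+3]} {mpoly K[n.+3]} _ (@actl K n g)
    (@actl_is_linear K n g).

Section Act2.
Variables (K : fieldType) (n : nat).
Notation P := {mpoly K[n.+3]}.
Implicit Types (theta g : P).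

Lemma actE theta g : act theta g = actl g theta. Proof. by []. Qed.

Lemma act0 g : act 0 g = 0.
Proof. by rewrite actE raddf0. Qed.
Lemma actD t1 t2 g : act (t1 + t2) g = act t1 g + act t2 g.
Proof. by rewrite !actE raddfD. Qed.
Lemma actB t1 t2 g : act (t1 - t2) g = act t1 g - act t2 g.
Proof. by rewrite !actE raddfB. Qed.
Lemma actZ a t g : act (a *: t) g = a *: act t g.
Proof. by rewrite !actE linearZ. Qed.
Lemma act_sum (I : Type) (r : seq I) (Q : pred I) (F : I -> P) g :
  act (\sum_(i <- r | Q i) F i) g = \sum_(i <- r | Q i) act (F i) g.
Proof. by rewrite actE raddf_sum. Qed.

Lemma actX m g : act 'X_[m] g = g^`M[m].
Proof. by rewrite /act msuppX big_seq1 mcoeffX eqxx scale1r. Qed.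

Lemma actDr theta g1 g2 : act theta (g1 + g2) = act theta g1 + act theta g2.
Proof. by rewrite /act -big_split; apply: eq_bigr => m _; rewrite mderivmD scalerDr. Qed.
Lemma actZr theta a g : act theta (a *: g) = a *: act theta g.
Proof. by rewrite /act scaler_sumr; apply: eq_bigr => m _; rewrite mderivmZ !scalerA mulrC. Qed.
Lemma act0r theta : act theta 0 = 0.
Proof. by rewrite /act big1 // => m _; rewrite raddf0 scaler0. Qed.
Lemma actNr theta g : act theta (- g) = - act theta g.
Proof. by rewrite -scaleN1r actZr scaleN1r. Qed.
Lemma actBr theta g1 g2 : act theta (g1 - g2) = act theta g1 - act theta g2.
Proof. by rewrite actDr actNr. Qed.
Lemma act_sumr theta (I : Type) (r : seq I) (Q : pred I) (F : I -> P) :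
  act theta (\sum_(i <- r | Q i) F i) = \sum_(i <- r | Q i) act theta (F i).
Proof.
by rewrite /act exchange_big /=; apply: eq_bigr => m _;
  rewrite raddf_sum scaler_sumr.
Qed.

Lemma actXM m b g : act ('X_[m] * b) g = act 'X_[m] (act b g).
Proof.
elim/mpolyind: b => [|c m' b _ _ IH]; first by rewrite mulr0 act0 act0r.
rewrite mulrDr actD IH actD actDr; congr (_ + _).
by rewrite -scalerAr !actZ actZr -mpolyXD addmC !actX mderivmDm.
Qed.

Lemma actM a b g : act (a * b) g = act a (act b g).
Proof.
elim/mpolyind: a => [|c m a _ _ IH]; first by rewrite mul0r !act0.
by rewrite mulrDl actD IH -scalerAl actZ actXM !actD !actZ.
Qed.
End Act2.


Definition xdeg n (m : 'X_{1..n.+3}) : nat := (\sum_(k < n.+3 | (k <= n)%N) m k)%N.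
Lemma xdeg0 n : @xdeg n 0%MM = 0%N.
Proof. by rewrite /xdeg big1 // => k _; rewrite mnm0E. Qed.
Lemma xdegD n : {morph @xdeg n : m1 m2 / (m1 + m2)%MM >-> (m1 + m2)%N}.
Proof. by move=> m1 m2; rewrite /xdeg -big_split; apply: eq_bigr => k _; rewrite mnmDE. Qed.
HB.instance Definition _ n := isMeasure.Build n.+3 (@xdeg n) (@xdeg0 n) (@xdegD n).

Section Basic.
Variables (K : fieldType) (n : nat).
Notation P := {mpoly K[n.+3]}.
Notation xd := (@xdeg n).
Implicit Types (m : 'X_{1..n.+3}) (q : P).
Definition UV (q : P) : P := pihomog xd 0 q.
Definition kuv (q : P) := q \is 0.-homog for xd.

Lemma xdeg_ge m (k : 'I_n.+3) : (k <= n)%N -> (m k <= xd m)%N.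
Proof. by move=> hk; rewrite /xdeg (bigD1 k) //= leq_addr. Qed.

Lemma xdeg_eq0 m : (xd m == 0%N) = [forall k : 'I_n.+3, (k <= n)%N ==> (m k == 0%N)].
Proof.
apply/eqP/forallP => [H k|H]; first by apply/implyP => hk; have := xdeg_ge m hk; rewrite H; lia.
by rewrite /xdeg big1 // => k hk; have /implyP/(_ hk)/eqP := H k.
Qed.

Lemma mcoeff_pihomog (mf : measure n.+3) e (q : P) m :
  (pihomog mf e q)@_m = if mf m == e then q@_m else 0.
Proof.
have Eq : q@_m = \sum_(m' <- msupp q) q@_m' * (m' == m)%:R.
  by rewrite [in LHS](mpolyE q) raddf_sum /=; apply: eq_bigr => m' _; rewrite mcoeffZ mcoeffX.
rewrite pihomogE raddf_sum /=.
under eq_bigr => m' _ do rewrite mcoeffZ mcoeffX.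
case: (mf m =P e) => He.
  rewrite Eq big_mkcond; apply: eq_bigr => m' _.
  by case: (m' =P m) => [->|_]; rewrite ?He ?eqxx ?mulr0 //; case: ifP.
rewrite big1 // => m' /eqP H0.
case: (m' =P m) => [E|_]; rewrite ?mulr0 //.
by exfalso; apply: He; rewrite -E.
Qed.

Lemma mcoeff_UV q m : (UV q)@_m = if xd m == 0%N then q@_m else 0.
Proof. exact: mcoeff_pihomog. Qed.

Lemma kuv_UV q : kuv (UV q). Proof. exact: pihomogP. Qed.

Lemma kuv_UVE q : kuv q -> UV q = q. Proof. exact: pihomog_dE. Qed.

Lemma in_Kuv_kuv q : in_Kuv q -> kuv q.
Proof.
move=> H; apply/dhomogP => m /H Hm.
by apply/eqP; rewrite xdeg_eq0; apply/forallP => k; apply/implyP => /Hm ->.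
Qed.

Lemma kuv_supp q m : kuv q -> m \in msupp q -> xd m = 0%N.
Proof. by move/dhomogP => H /H. Qed.

Lemma kuv_coef q m : kuv q -> xd m != 0%N -> q@_m = 0.
Proof.
move=> H nz; apply: memN_msupp_eq0; apply/negP => /(kuv_supp H) E.
by rewrite E in nz.
Qed.

Lemma UV_homog e q : q \is e.-homog -> UV q \is e.-homog.
Proof.
move/dhomogP => H; apply/dhomogP => m hm.
have : (UV q)@_m != 0 by rewrite -mcoeff_msupp.
by rewrite mcoeff_UV; case: ifP => _; rewrite ?eqxx // -mcoeff_msupp => /H.
Qed.

Lemma UVX m : UV 'X_[m] = if xd m == 0%N then 'X_[m] else 0.
Proof. exact: pihomogX. Qed.

Lemma UV_lin : linear UV.
Proof. exact: pihomog_is_linear. Qed.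

Lemma UVD a b : UV (a + b) = UV a + UV b. Proof. exact: pihomogD. Qed.
Lemma UVB a b : UV (a - b) = UV a - UV b. Proof. exact: pihomogB. Qed.
Lemma UVZ c a : UV (c *: a) = c *: UV a.
Proof. by rewrite /UV linearZ. Qed.
Lemma UV0 : UV 0 = 0. Proof. exact: pihomog0. Qed.

Lemma UVXM m b : UV ('X_[m] * b) = UV 'X_[m] * UV b.
Proof.
elim/mpolyind: b => [|c m' b _ _ IH]; first by rewrite mulr0 UV0 mulr0.
rewrite mulrDr !UVD IH mulrDr; congr (_ + _).
rewrite -scalerAr !UVZ -scalerAr -mpolyXD !UVX xdegD.
case: (xd m =P 0%N) => h1; case: (xd m' =P 0%N) => h2;
  rewrite ?h1 ?h2 /= ?mpolyXD ?mul0r ?mulr0 ?scaler0 //.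
all: by case: ifP => [/eqP|]; rewrite ?scaler0 //; lia.
Qed.

Lemma UVM a b : UV (a * b) = UV a * UV b.
Proof.
elim/mpolyind: a => [|c m a _ _ IH]; first by rewrite mul0r UV0 mul0r.
by rewrite mulrDl !UVD IH mulrDl -scalerAl !UVZ UVXM -scalerAl.
Qed.

Lemma dhomog_mderivm (mf : measure n.+3) e (q : P) m :
  q \is e.-homog for mf -> q^`M[m] \is (e - mf m)%N.-homog for mf.
Proof.
move/dhomogP => H; apply/dhomogP => k; rewrite mcoeff_msupp mcoeff_mderivm.
move=> nz; have : (m + k)%MM \in msupp q.
  by rewrite mcoeff_msupp; apply: contraNneq nz => ->; rewrite mul0rn.
by move/H; rewrite mfD => <-; lia.
Qed.

Lemma mderivm_big (mf : measure n.+3) e (q : P) m :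
  q \is e.-homog for mf -> (e < mf m)%N -> q^`M[m] = 0.
Proof.
move/dhomogP => H lt; apply/mpolyP => k; rewrite mcoeff_mderivm mcoeff0.
case: (boolP ((m + k)%MM \in msupp q)) => [/H|/memN_msupp_eq0 ->]; last by rewrite mul0rn.
by rewrite mfD; lia.
Qed.

Lemma act_UV_kuv zeta q : kuv q -> act zeta q = act (UV zeta) q.
Proof.
move=> hq; apply/eqP; rewrite -subr_eq0 -actB; apply/eqP.
rewrite /act big1_seq // => m /andP[_ hm].
have nz : xd m != 0%N.
  apply: contraTneq hm => E; rewrite mcoeff_msupp negbK mcoeffB mcoeff_UV E eqxx.
  by rewrite subrr.
by rewrite (mderivm_big hq) ?scaler0 // lt0n.
Qed.

End Basic.


Section Mono.
Variables (K : fieldType) (n : nat).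
Notation P := {mpoly K[n.+3]}.
Notation xd := (@xdeg n).
Implicit Types (m : 'X_{1..n.+3}) (q : P).

Definition iu : 'I_n.+3 := Ordinal (leqnSn n.+2).
Definition iv : 'I_n.+3 := Ordinal (ltnSn n.+2).
Definition mono e a : 'X_{1..n.+3} := (U_(iu) *+ a + U_(iv) *+ (e - a))%MM.

Lemma mono_val e a (k : 'I_n.+3) :
  mono e a k = if val k == n.+1 then a else if val k == n.+2 then (e - a)%N else 0%N.
Proof.
rewrite /mono mnmDE !mulmnE !mnm1E -!val_eqE /=.
case: k => k hk /=.
rewrite ![_ == k]eq_sym.
have [->|h1] := eqVneq k n.+1; first by rewrite /=; lia.
by case: (k == n.+2) => /=; lia.
Qed.

Lemma xdeg_mono e a : xd (mono e a) = 0%N.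
Proof.
rewrite /xdeg big1 // => k hk; rewrite mono_val.
have hk' : (val k <= n)%N := hk.
case: eqP => [E|_]; first by move: hk'; rewrite E; lia.
by case: eqP => [E|_] //; move: hk'; rewrite E; lia.
Qed.

Lemma mdeg_mono e a : (a <= e)%N -> mdeg (mono e a) = e.
Proof. by move=> h; rewrite /mono mdegD !mdegMn !mdeg1; lia. Qed.

Lemma mono_iu e a : mono e a iu = a.
Proof. by rewrite mono_val eqxx. Qed.

Lemma mono_char e m : xd m = 0%N -> mdeg m = e -> (m iu <= e)%N /\ m = mono e (m iu).
Proof.
move=> hx hd.
have Z : forall k : 'I_n.+3, (k <= n)%N -> m k = 0%N.
  move=> k hk; have := xdeg_ge m hk; rewrite hx; lia.
have S : mdeg m = (m iu + m iv)%N.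
  rewrite mdegE (bigD1 iu) //= (bigD1 iv) //; last by rewrite -val_eqE /=; lia.
  rewrite big1; first by rewrite /= addn0.
  move=> k /andP[h1 h2].
  apply: Z; move: (ltn_ord k) h1 h2; rewrite -!val_eqE /=; lia.
split; first lia.
apply/mnmP => k; rewrite mono_val.
case: (val k =P n.+1) => [E|h1]; first by congr (m _); apply/val_inj.
case: (val k =P n.+2) => [E|h2].
  have -> : k = iv by apply/val_inj.
  lia.
apply: Z; change (val k <= n)%N; have : (val k < n.+3)%N := ltn_ord k; lia.
Qed.

Lemma kuv_span e q : kuv q -> q \is e.-homog ->
  q = \sum_(a < e.+1) q@_(mono e a) *: 'X_[mono e a].
Proof.
move=> hk hh; apply/mpolyP => m; rewrite raddf_sum /=.
under eq_bigr => a _ do rewrite mcoeffZ mcoeffX.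
have E : forall a : 'I_e.+1, q@_(mono e a) * (mono e a == m)%:R = q@_m * (mono e a == m)%:R.
  by move=> a; case: eqP => [->|_]; rewrite ?mulr0.
under eq_bigr => a _ do rewrite E.
rewrite -mulr_sumr.
case: (boolP (m \in msupp q)) => [hm|/memN_msupp_eq0 ->]; last by rewrite mul0r.
have [le mE] := mono_char (kuv_supp hk hm) (dhomog_mf hh hm).
have lt : (m iu < e.+1)%N by lia.
rewrite (bigD1 (Ordinal lt)) //= -mE eqxx big1 ?addr0 ?mulr1 // => a ha.
case: eqP => // E2; move: ha; rewrite -val_eqE /=.
by rewrite -E2 mono_iu eqxx.
Qed.

End Mono.


Section Per.
Variables (K : fieldType) (n d : nat) (p : 'I_n.+1 -> {mpoly K[n.+3]}) (g : {mpoly K[n.+3]}).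
Notation P := {mpoly K[n.+3]}.
Notation xd := (@xdeg n).
Implicit Types (m : 'X_{1..n.+3}) (q : P).
Hypothesis hp : forall i, kuv (p i) /\ p i \is d.-1.-homog.
Hypothesis hg : kuv g /\ g \is d.-homog.
Hypothesis hd : (1 <= d)%N.
Let f : P := \sum_(i < n.+1) 'X_(inord i) * p i + g.

Lemma xdegU (k : 'I_n.+3) : xd U_(k) = (k <= n)%N.
Proof.
rewrite /xdeg; case: (boolP (k <= n)%N) => hk.
  rewrite (bigD1 k) //= mnm1E eqxx big1 // => k' /andP[_ h].
  by rewrite mnm1E eq_sym (negbTE h).
by rewrite big1 // => k' hk'; rewrite mnm1E; case: eqP => // E; rewrite E hk' in hk.
Qed.

Lemma deriv_kuv_x q (k : 'I_n.+3) : kuv q -> (k <= n)%N -> mderiv k q = 0.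
Proof.
move=> hq hk; rewrite -mderivmU1m (mderivm_big hq) //.
by change (0 < @xdeg n U_(k)%MM)%N; rewrite xdegU hk.
Qed.

Lemma inord_inj (i j : 'I_n.+1) : (inord i : 'I_n.+3) = inord j -> i = j.
Proof.
move=> /(congr1 (@nat_of_ord _)); rewrite !inordK; last 2 first.
- by have := ltn_ord j; lia.
- by have := ltn_ord i; lia.
by move=> E; apply/val_inj.
Qed.

Lemma derf (i : 'I_n.+1) : mderiv (inord i) f = p i.
Proof.
have hi : ((inord i : 'I_n.+3) <= n)%N.
  by rewrite inordK; have := ltn_ord i; lia.
rewrite /f mderivD (deriv_kuv_x hg.1 hi) addr0 raddf_sum /=.
rewrite (bigD1 i) //= big1 ?addr0.
  rewrite mderivM (deriv_kuv_x (hp i).1 hi) mulr0 addr0 mderivX mnm1E eqxx.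
  have -> : (U_(inord i : 'I_n.+3) - U_(inord i))%MM = 0%MM by rewrite -[X in (X - _)%MM]add0m addmK.
  by rewrite mpolyX0 scale1r mul1r.
move=> j hj; rewrite mderivM (deriv_kuv_x (hp j).1 hi) mulr0 addr0 mderivX mnm1E.
case: eqP => [/inord_inj E|_]; first by rewrite E eqxx in hj.
by rewrite scale0r mul0r.
Qed.

Lemma f_homog : f \is d.-homog.
Proof.
rewrite /f; apply: rpredD; last exact: hg.2.
apply: rpred_sum => i _.
have hX : ('X_(inord i) : P) \is 1.-homog.
  by rewrite dhomogX /= mdeg1.
by have := dhomogM hX (hp i).2; rewrite add1n prednK.
Qed.


Lemma mnm_split m (j : 'I_n.+3) : (0 < m j)%N -> m = (U_(j) + (m - U_(j)))%MM.
Proof.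
move=> h; apply/mnmP => k; rewrite mnmDE mnmBE mnm1E.
by case: eqP => [<-|_] /=; lia.
Qed.

Lemma xsplit m : xd m != 0%N -> exists i : 'I_n.+1, exists m', m = (U_(inord i) + m')%MM.
Proof.
rewrite xdeg_eq0 => /forallPn [k]; rewrite negb_imply => /andP[hk nz].
have hk' : (k < n.+1)%N by [].
exists (Ordinal hk'), (m - U_(k))%MM.
have -> : (inord (Ordinal hk') : 'I_n.+3) = k.
  by apply/val_inj; rewrite /= inordK //; lia.
by apply: mnm_split; rewrite lt0n.
Qed.

Lemma derf_x m : xd m != 0%N -> kuv (f^`M[m]) /\ f^`M[m] \is (d - mdeg m)%N.-homog.
Proof.
move=> /xsplit [i [m' ->]]; rewrite mderivmDm mderivmU1m derf.
split; first by have := dhomog_mderivm m' (hp i).1; rewrite sub0n.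
have := dhomog_mderivm m' (hp i).2.
have -> : (d - mdeg (U_(inord i : 'I_n.+3) + m'))%N = (d.-1 - mdeg m')%N.
  by rewrite mdegD mdeg1; lia.
by [].
Qed.

Lemma act_x zeta e : zeta \is e.-homog -> UV zeta = 0 ->
  kuv (act zeta f) /\ act zeta f \is (d - e)%N.-homog.
Proof.
move=> hz hUV.
have H : forall m, m \in msupp zeta -> kuv (f^`M[m]) /\ f^`M[m] \is (d - e)%N.-homog.
  move=> m hm.
  have hx : xd m != 0%N.
    apply/negP => /eqP E; move: hm; rewrite mcoeff_msupp.
    have := congr1 (mcoeff m) hUV; rewrite mcoeff_UV /= mcoeff0.
    by rewrite [X in if X then _ else _](_ : _ = true) ?E // => ->; rewrite eqxx.
  have := derf_x hx; rewrite (dhomog_mf hz hm) => -[h1 h2]; split => //.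
rewrite /act big_seq; split; apply: rpred_sum => m hm; apply: rpredZ; by have [] := H m hm.
Qed.

Lemma act_y (i : 'I_n.+1) zeta : act ('X_(inord i) * zeta) f = act zeta (p i).
Proof. by rewrite mulrC actM actX mderivmU1m derf. Qed.

Lemma mderivm_Xmul (k : 'I_n.+3) m q : m k = 0%N -> ('X_k * q)^`M[m] = 'X_k * q^`M[m].
Proof.
move: {2}(mdeg m).+1 (ltnSn (mdeg m)) => N; elim: N m q => [|N IH] m q //.
move=> lt hk.
case: (boolP (m == 0%MM)) => [/eqP ->|nz]; first by rewrite !mderivm0m.
have [j hj] : exists j, (0 < m j)%N.
  apply/existsP; apply: contraR nz => /existsPn H; apply/eqP/mnmP => j.
  by rewrite mnm0E; have := H j; rewrite lt0n negbK => /eqP.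
rewrite (mnm_split hj) !mderivmDm !mderivmU1m mderivM mderivX mnm1E.
have hjk : (k == j) = false by apply/negP => /eqP E; rewrite E in hk; rewrite hk in hj.
case: eqP => [E|_]; first by move: hjk; rewrite E eqxx.
rewrite scale0r mul0r add0r IH //.
  have := mdegD U_(j) (m - U_(j)); rewrite -(mnm_split hj) mdeg1; lia.
by rewrite mnmBE mnm1E eq_sym hjk hk.
Qed.

Lemma act_kuv_Xmul (k : 'I_n.+3) phi q : kuv phi -> (k <= n)%N ->
  act phi ('X_k * q) = 'X_k * act phi q.
Proof.
move=> hphi hk; rewrite /act mulr_sumr !big_seq; apply: eq_bigr => m hm.
rewrite mderivm_Xmul ?scalerAr //.
have := xdeg_ge m hk; rewrite (kuv_supp hphi hm); lia.
Qed.

Lemma act_kuv_f phi : kuv phi -> (forall i, act phi (p i) = 0) -> act phi f = act phi g.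
Proof.
move=> hphi H; rewrite /f actDr act_sumr big1 ?add0r // => i _.
rewrite act_kuv_Xmul ?H ?mulr0 //.
by rewrite inordK; have := ltn_ord i; lia.
Qed.


Lemma act_kuv_homog (theta : P) t (Y : P) e : theta \is t.-homog -> kuv Y -> Y \is e.-homog ->
  kuv (act theta Y) /\ act theta Y \is (e - t)%N.-homog.
Proof.
move=> ht hY hYe; rewrite /act big_seq; split; apply: rpred_sum => m hm; apply: rpredZ.
  by have := dhomog_mderivm m hY; rewrite sub0n.
by have := dhomog_mderivm m hYe; rewrite /= (dhomog_mf ht hm).
Qed.

Lemma act_f_big theta j : (d < j)%N -> theta \is j.-homog -> act theta f = 0.
Proof.
move=> lt hj; rewrite /act big_seq big1 // => m hm.
by rewrite (mderivm_big f_homog) ?scaler0 //= (dhomog_mf hj hm).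
Qed.

Lemma hdim_big j k : (d < j)%N -> (0 < k)%N -> hdim f j k -> False.
Proof.
move=> lt k0 [b [hb ind _]].
have := ind (fun _ => 1); rewrite /annih (act_f_big (j := j)) //; last first.
  by apply: rpred_sum => r _; apply: rpredZ; exact: hb.
by move=> /(_ erefl (Ordinal k0)) /eqP; rewrite oner_eq0.
Qed.


Lemma UV_comb k (c : 'I_k -> K) (b : 'I_k -> P) :
  UV (\sum_j c j *: b j) = \sum_j c j *: UV (b j).
Proof.
elim/big_rec2: _ => [|j y1 y2 _ <-]; first exact: UV0.
by rewrite UVD UVZ.
Qed.

Lemma inj_false i l : (i < d)%N -> hdim f i (d + 2) -> l \is 1.-homog ->
  mul_inj f l i -> False.
Proof.
move=> lt [b [hb ind _]] hl hinj.
have hY : forall r, kuv (act (b r - UV (b r)) f) /\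
     act (b r - UV (b r)) f \is (d - i)%N.-homog.
  move=> r; apply: (act_x (e := i)); first by apply: rpredB; [exact: hb | exact: UV_homog].
  by rewrite UVB (kuv_UVE (kuv_UV _)) subrr.
have C := @count_two K _ _ (d + 2) (d - i - 1).+1 i.+1
   (fun r => act l (act (b r - UV (b r)) f)) (fun r => UV (b r))
   (fun a : 'I_(d - i - 1).+1 => 'X_[mono n (d - i - 1) a]) (fun a : 'I_i.+1 => 'X_[mono n i a]).
have H : (d + 2 <= (d - i - 1).+1 + i.+1)%N -> False by lia.
apply: H; apply: C.
- move=> c H1 H2; apply: ind.
  have E : \sum_j c j *: b j = \sum_j c j *: (b j - UV (b j)).
    transitivity (\sum_j c j *: b j - \sum_j c j *: UV (b j)); first by rewrite H2 subr0.
    by rewrite -sumrB; apply: eq_bigr => r _; rewrite scalerBr.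
  apply: hinj; first by apply: rpred_sum => r _; apply: rpredZ; exact: hb.
  rewrite /annih actM E act_sum act_sumr -[RHS]H1; apply: eq_bigr => r _.
  by rewrite actZ actZr.
- move=> r; have [h1 h2] := act_kuv_homog hl (hY r).1 (hY r).2.
  exists (fun a => (act l (act (b r - UV (b r)) f))@_(mono n (d - i - 1) a)).
  by apply: kuv_span; rewrite // subnDA.
- move=> r; exists (fun a => (UV (b r))@_(mono n i a)).
  by apply: kuv_span; [exact: kuv_UV | exact: UV_homog].
Qed.


Lemma bfull j : (j <= d)%N -> hdim f j (d + 2) -> forall phi, kuv phi ->
  phi \is j.-homog -> (forall s, act phi (p s) = 0) -> phi = 0.
Proof.
move=> le [b [hb ind _]] phi hk hh hp0.
apply/eqP; apply/negP => nz.
have Sphi := kuv_span hk hh.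
have [a0 ha0] : exists a0 : 'I_j.+1, phi@_(mono n j a0) != 0.
  case: (pickP (fun a : 'I_j.+1 => phi@_(mono n j a) != 0)) => [a0 h|H]; first by exists a0.
  exfalso; apply: nz; apply/eqP; rewrite {1}Sphi big1 // => a _.
  by have := H a; rewrite /= => /negbFE /eqP ->; rewrite scale0r.
have C := @count_indep2 K _ (d + 2) (d - j).+1 j (fun r => act (b r) f)
   (fun a : 'I_(d - j).+1 => 'X_[mono n (d - j) a])
   (fun r : 'I_j => act 'X_[mono n j (lift a0 r)] f).
have H : (d + 2 <= (d - j).+1 + j)%N -> False by lia.
apply: H; apply: C.
- move=> c Hc; apply: ind; rewrite /annih act_sum -[RHS]Hc; apply: eq_bigr => r _.
  by rewrite actZ.
- move=> r.
  have hUV := kuv_span (kuv_UV (b r)) (UV_homog (hb r)).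
  pose c0 := (UV (b r))@_(mono n j a0) / phi@_(mono n j a0).
  pose e2 := fun r0 : 'I_j => (UV (b r))@_(mono n j (lift a0 r0)) - c0 * phi@_(mono n j (lift a0 r0)).
  have E1 : UV (b r) = c0 *: phi + \sum_(r0 < j) e2 r0 *: 'X_[mono n j (lift a0 r0)].
    rewrite {1}hUV {1}Sphi !(bigD1_ord a0) //= scalerDr scaler_sumr -addrA -big_split /=.
    congr (_ + _); first by rewrite scalerA /c0 divfK.
    apply: eq_bigr => r0 _; rewrite scalerA -scalerDl; congr (_ *: _).
    by rewrite /e2 addrC subrK.
  pose B := act (b r - UV (b r)) f + c0 *: act phi f.
  have E2 : act (b r) f = B + \sum_(r0 < j) e2 r0 *: act 'X_[mono n j (lift a0 r0)] f.
    have E3 : act (UV (b r)) f = c0 *: act phi f +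
        \sum_(r0 < j) e2 r0 *: act 'X_[mono n j (lift a0 r0)] f.
      rewrite {1}E1 actD actZ act_sum; congr (_ + _).
      by apply: eq_bigr => r0 _; rewrite actZ.
    by rewrite -{1}(subrK (UV (b r)) (b r)) actD E3 /B addrA.
  have hB : kuv B /\ B \is (d - j)%N.-homog.
    have [h1 h2] : kuv (act (b r - UV (b r)) f) /\ act (b r - UV (b r)) f \is (d - j)%N.-homog.
      apply: (act_x (e := j)); first by apply: rpredB; [exact: hb | exact: UV_homog].
      by rewrite UVB (kuv_UVE (kuv_UV _)) subrr.
    have [h3 h4] := act_kuv_homog hh hg.1 hg.2.
    rewrite /B (act_kuv_f hk hp0).
    by split; apply: rpredD => //; apply: rpredZ.
  exists (fun a => B@_(mono n (d - j) a)), e2.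
  by rewrite E2 -(kuv_span hB.1 hB.2).
Qed.


Definition bfullP j := forall phi, kuv phi -> phi \is j.-homog ->
  (forall s, act phi (p s) = 0) -> phi = 0.

Lemma mpolyX_neq0 m : ('X_[m] : P) != 0.
Proof.
apply/eqP => /(congr1 (mcoeff m)); rewrite mcoeffX eqxx mcoeff0 => /eqP.
by rewrite oner_eq0.
Qed.

Lemma bfull_prop j j' : (j' <= j)%N -> bfullP j -> bfullP j'.
Proof.
move=> le H phi hk hh hp0.
have hXk : ('X_(iu n) : P) \is 0.-homog for xd by rewrite dhomogX /= xdegU /=; lia.
have hXh : ('X_(iu n) : P) \is 1.-homog by rewrite dhomogX /= mdeg1.
have E : 'X_(iu n) ^+ (j - j') * phi = 0.
  apply: H.
  - by have := dhomogM (dhomogMn (j - j') hXk) hk; rewrite mul0n.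
  - have := dhomogM (dhomogMn (j - j') hXh) hh; rewrite mul1n.
    by have -> : (j - j' + j' = j)%N by lia.
  - by move=> s; rewrite actM hp0 act0r.
move/eqP: E; rewrite mulf_eq0 expf_eq0 (negbTE (mpolyX_neq0 _)) andbF /=.
by move/eqP.
Qed.


Definition pt (u0 v0 : K) : 'I_n.+3 -> K :=
  fun k => if val k == n.+1 then u0 else if val k == n.+2 then v0 else 0.

Lemma meval_mono u0 v0 e a : meval (pt u0 v0) ('X_[mono n e a] : P) = u0 ^+ a * v0 ^+ (e - a).
Proof.
rewrite mevalX (bigD1 (iu n)) //= (bigD1 (iv n)) /=; last by rewrite -val_eqE /=; lia.
rewrite big1 ?mulr1.
  rewrite !mono_val /pt /= eqxx.
  have -> : (n.+2 == n.+1) = false by apply/eqP; lia.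
  by rewrite eqxx.
move=> k /andP[h1 h2]; rewrite mono_val /pt.
move: h1 h2; rewrite -!val_eqE /= => h1 h2.
by rewrite (negbTE h1) (negbTE h2) expr0.
Qed.

Lemma surj_false i l : (i.+1 <= d)%N -> bfullP i.+1 -> l \is 1.-homog ->
  mul_surj f l i -> False.
Proof.
move=> le HB hl hs.
have SL := kuv_span (kuv_UV l) (UV_homog hl).
pose al := (UV l)@_(mono n 1 1); pose be := (UV l)@_(mono n 1 0).
have [u0 [v0 [a1 [h0 hnz]]]] : exists u0 v0 (a1 : 'I_i.+2),
    be * v0 + al * u0 = 0 /\ u0 ^+ a1 * v0 ^+ (i.+1 - a1) != 0.
  case: (boolP ((al == 0) && (be == 0))) => [/andP[/eqP -> /eqP ->]|].
    exists 1, 0, ord_max; rewrite !mul0r addr0 /= subnn expr0 expr1n mulr1 oner_eq0.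
    by split.
  rewrite negb_and => hab.
  case: (boolP (be == 0)) => [/eqP hb|hb].
    have ha : al != 0 by move: hab; rewrite hb eqxx orbF.
    exists (- be), al, ord0; rewrite hb oppr0 mulr0 mul0r addr0 /= expr0 mul1r subn0.
    by split => //; rewrite expf_neq0.
  exists (- be), al, ord_max; rewrite /= subnn expr0 mulr1; split.
    by rewrite mulrN mulrC addrN.
  by rewrite expf_neq0 // oppr_eq0.
pose eta : P := 'X_[mono n i.+1 a1].
have heta_k : kuv eta by rewrite /kuv dhomogX /= xdeg_mono.
have heta_h : eta \is i.+1.-homog.
  by rewrite dhomogX /= mdeg_mono //; have := ltn_ord a1; lia.
have [th [hth hann]] := hs eta heta_h.
have E : eta - UV l * UV th = 0.
  apply: HB.
  - apply: rpredB => //; have := dhomogM (kuv_UV l) (kuv_UV th); by rewrite addn0.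
  - apply: rpredB => //; have := dhomogM (UV_homog hl) (UV_homog hth); by rewrite add1n.
  - move=> s; rewrite -(kuv_UVE heta_k) -UVM -UVB -act_UV_kuv; last exact: (hp s).1.
    by rewrite -act_y actM hann act0r.
have := congr1 (meval (pt u0 v0)) E.
have SL2 : UV l = be *: 'X_[mono n 1 0] + al *: 'X_[mono n 1 1].
  rewrite {1}SL !big_ord_recr big_ord0 /=.
  by rewrite -/be -/al; congr (_ + _); apply: add0r.
rewrite mevalB mevalM meval0 meval_mono SL2 mevalD !mevalZ !meval_mono /=.
rewrite !expr0 !expr1 !mulr1 !mul1r h0 mul0r subr0 => /eqP.
by rewrite (negbTE hnz).
Qed.

End Per.

Unset Implicit Arguments.

Theorem proposition4p5 (K : closedFieldType) (Kchar0 : [pchar K] =i pred0)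
  (n d : nat) (f : {mpoly K[n.+3]}) :
  (2 <= n)%N -> (n.+1 <= d)%N ->
  perazzo_form d f -> has_WLP f ->
  forall i j : nat, hdim f i (d + 2) -> hdim f j (d + 2) -> i = j.
Proof.
move=> hn hdn [p [g [hp hg _ _ ->]]] [l [hl hW]].
have hp' : forall i, kuv (p i) /\ p i \is d.-1.-homog.
  by move=> i; have [h1 h2] := hp i; split => //; exact: in_Kuv_kuv.
have hg' : kuv g /\ g \is d.-homog by split; [exact: in_Kuv_kuv hg.1 | exact: hg.2].
have hd : (1 <= d)%N by lia.
have claim : forall i j, (i < j)%N -> hdim (\sum_(i < n.+1) 'X_(inord i) * p i + g) i (d + 2) ->
    hdim (\sum_(i < n.+1) 'X_(inord i) * p i + g) j (d + 2) -> False.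
  move=> i j lt hi hj.
  case: (ltnP d j) => hjd.
    by apply: (hdim_big hp' hg' hd hjd _ hj); rewrite addn2.
  have hid : (i < d)%N by lia.
  case: (hW i) => [hinj|hsurj].
    exact: (inj_false hp' hg' hd hid hi hl hinj).
  apply: (surj_false hp' hg' hd _ _ hl hsurj); first by lia.
  have Hb := bfull hp' hg' hd hjd hj.
  by apply: (@bfull_prop K n d p g hg' hd j) => //; lia.
move=> i j hi hj; case: (ltngtP i j) => // lt; exfalso.
  exact: claim lt hi hj.
exact: claim lt hj hi.
Qed.
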